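(* Let $\nu_2\le\nu_1$ and endow $\mathbb{F}_q^{\nu_1}$ and $\mathbb{F}_q^{\nu_2}$ with the Hamming weight $\operatorname{wt}_H$. If $\psi:\mathbb{F}_q^{\nu_1}\to\mathbb{F}_q^{\nu_2}$ is a surjective weakly row monomial linear map, then $\operatorname{wt}_{\mathrm{quot},\psi}=\operatorname{wt}_H$ on $\mathbb{F}_q^{\nu_2}$.
   Context: A linear map $\psi:\mathbb{F}_q^{\nu_1}\to\mathbb{F}_q^{\nu_2}$ is weakly row monomial if for each standard basis vector $e_i$ of $\mathbb{F}_q^{\nu_1}$, $\psi(e_i)=\lambda_ie'_{j_i}$ for some (possibly zero) $\lambda_i\in\mathbb{F}_q$ and some standard basis vector $e'_{j_i}$ of $\mathbb{F}_q^{\nu_2}$. The quotient weight is $\operatorname{wt}_{\mathrm{quot},\psi}(y)=\min\{\operatorname{wt}_H(x):x\in\psi^{-1}(y)\}$. *)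

(* Defs.v *)
From HB Require Import structures.
From mathcomp Require Import all_boot all_order all_algebra.
Set Implicit Arguments. Unset Strict Implicit. Unset Printing Implicit Defensive.
Import GRing.Theory.
Local Open Scope ring_scope.

Definition wtH (F : finFieldType) (n : nat) (x : 'rV[F]_n) : nat :=
  #|[set i : 'I_n | x 0 i != 0]|.

Definition std_basis (F : finFieldType) (n : nat) (i : 'I_n) : 'rV[F]_n :=
  delta_mx 0 i.
Arguments std_basis F {n} i.

Definition weakly_row_monomial (F : finFieldType) (n1 n2 : nat)
    (psi : 'rV[F]_n1 -> 'rV[F]_n2) : Prop :=
  forall i : 'I_n1, exists (lam : F) (j : 'I_n2),
    psi (std_basis F i) = lam *: std_basis F j.

(* Quotient weight: min of wtH x over the fibre psi^{-1}(y).
   (If the fibre is empty the value is the default n1.+1; irrelevant for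
   surjective psi.) *)
Definition wt_quot (F : finFieldType) (n1 n2 : nat)
    (psi : 'rV[F]_n1 -> 'rV[F]_n2) (y : 'rV[F]_n2) : nat :=
  \big[minn/n1.+1]_(x : 'rV[F]_n1 | psi x == y) wtH x.

(* Main.v *)
Require Import Defs.
From HB Require Import structures.
From mathcomp Require Import all_boot all_order all_algebra.
Import GRing.Theory.
Local Open Scope ring_scope.

Lemma wt_sum (F : finFieldType) m n (c : 'I_m -> F) (f : 'I_m -> 'I_n) :
  (wtH (\sum_k c k *: std_basis F (f k)) <= #|[set k | c k != 0%R]|)%N.
Proof.
rewrite /wtH; apply: (leq_trans _ (leq_imset_card f _)); apply: subset_leq_card.
apply/subsetP => i; rewrite inE summxE => Hi.
apply: contraLR Hi => Hn; rewrite negbK.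
apply/eqP; apply: big1 => k _; rewrite mxE /std_basis mxE.
have [ck0|ck] := eqVneq (c k) 0; first by rewrite ck0 mul0r.
have Hfk : f k != i.
  by apply: contra Hn => /eqP <-; apply: imset_f; rewrite inE.
by rewrite eq_sym (negbTE Hfk) andbF mulr0.
Qed.

Lemma psi_expand (F : finFieldType) n1 n2
    (psi : {linear 'rV[F]_n1 -> 'rV[F]_n2}) (lam : 'I_n1 -> F) (J : 'I_n1 -> 'I_n2) :
  (forall i, psi (std_basis F i) = lam i *: std_basis F (J i)) ->
  forall x, psi x = \sum_i (x 0 i * lam i) *: std_basis F (J i).
Proof.
move=> H x; rewrite {1}(row_sum_delta x) raddf_sum; apply: eq_bigr => i _.
apply: (etrans (linearZZ psi _ _)).
by rewrite /= H scalerA.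
Qed.

Lemma bigmin_le_seq (T : eqType) (r : seq T) (P : pred T) (f : T -> nat) d x :
  x \in r -> P x -> (\big[minn/d]_(z <- r | P z) f z <= f x)%N.
Proof.
elim: r => // a r IH; rewrite inE big_cons => /orP[/eqP->|xr] Px.
  by rewrite Px geq_minl.
case: ifP => _; last exact: IH.
by apply: leq_trans (geq_minr _ _) (IH xr Px).
Qed.

Lemma bigmin_le_helper (T : finType) (P : pred T) (f : T -> nat) d x :
  P x -> (\big[minn/d]_(z | P z) f z <= f x)%N.
Proof. by move=> Px; apply: bigmin_le_seq => //; apply: mem_index_enum. Qed.

Theorem lemma4p1 (F : finFieldType) (n1 n2 : nat)
    (psi : {linear 'rV[F]_n1 -> 'rV[F]_n2}) :
  (n2 <= n1)%N ->
  weakly_row_monomial psi ->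
  (forall y : 'rV[F]_n2, exists x : 'rV[F]_n1, psi x = y) ->
  forall y : 'rV[F]_n2, wt_quot psi y = wtH y.
Proof.
move=> Hn Hwrm Hsurj y.
have [lam Hlam] := fin_all_exists Hwrm.
have [J HJ] := fin_all_exists (fun i => Hlam i).
have Hpsi := @psi_expand F n1 n2 psi lam J HJ.
have lower : forall x, psi x = y -> (wtH y <= wtH x)%N.
  move=> x <-; rewrite Hpsi; apply: leq_trans (@wt_sum _ _ _ _ _) _; rewrite /wtH.
  apply: subset_leq_card; apply/subsetP => i; rewrite !inE.
  by rewrite mulf_eq0 negb_or => /andP[].
have Hg : forall j, exists i, (J i == j) && (lam i != 0).
  move=> j; have [x Hx] := Hsurj (std_basis F j).
  have : (psi x) 0 j != 0 by rewrite Hx /std_basis mxE !eqxx oner_neq0.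
  rewrite Hpsi summxE => Hne.
  have [/existsP//|/existsPn H] := boolP [exists i, (J i == j) && (lam i != 0)].
  exfalso; move/negP: Hne; apply.
  apply/eqP; apply: big1 => i _; rewrite mxE /std_basis mxE.
  have := H i; rewrite negb_and negbK => /orP[Hj|/eqP->]; last by rewrite mulr0 mul0r.
  by rewrite eq_sym (negbTE Hj) andbF mulr0.
have [g Hgi] := fin_all_exists Hg.
pose x0 := \sum_j (y 0 j / lam (g j)) *: std_basis F (g j).
have Hx0 : psi x0 = y.
  rewrite /x0 raddf_sum {2}(row_sum_delta y); apply: eq_bigr => j _.
  have /andP[/eqP Hj Hl] := Hgi j.
  apply: (etrans (linearZZ psi _ _)); by rewrite /= HJ scalerA Hj divfK.
have Hwx0 : (wtH x0 <= wtH y)%N.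
  apply: leq_trans (@wt_sum _ _ _ _ _) _; rewrite /wtH.
  apply: subset_leq_card; apply/subsetP => j; rewrite !inE.
  by rewrite mulf_eq0 negb_or => /andP[].
apply/eqP; rewrite eqn_leq; apply/andP; split.
  apply: leq_trans Hwx0; apply: bigmin_le_helper; by rewrite Hx0.
rewrite /wt_quot; elim/big_ind: _ => //.
- apply: leq_trans (leqnSn _); apply: leq_trans Hn.
  by rewrite /wtH -[X in (_ <= X)%N]card_ord max_card.
- by move=> a b Ha Hb; rewrite leq_min Ha Hb.
- by move=> x /eqP; apply: lower.
Qed.
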